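(* Let $(|B(\lambda)\rangle,\mathcal{M})$ be an $N$-regular quantum scenario. Then the $N$ measurement angles in $M_1$ are evenly spaced modulo $\pi$ with adjacent angles differing by $\frac{\pi}{N}$, and likewise for $M_2$. Consequently, up to equivalence, $M_1=\{\frac{k\pi}{N}:k=0,\dots,N-1\}$ and $M_2=\{\frac{k\pi}{N}+\mu \bmod \pi:k=0,\dots,N-1\}$ for some $\mu\in[0,\pi)$.
   Context: $\equiv$ is equality modulo $2\pi$; $\oplus$ is addition mod 2. For $\varphi\in\mathbb{R}$, $E_\varphi=\cos\varphi X+\sin\varphi Y$, with $+1$ eigenvector $|\varphi\rangle=\frac{1}{\sqrt2}(|0\rangle+e^{i\varphi}|1\rangle)$ and $-1$ eigenvector $|\varphi+\pi\rangle$; outcomes $+1,-1$ relabelled $0,1$; measurements identified with angles. A measurement scenario $\mathcal{M}=(M_1,M_2,M_3)$ consists of finite sets $M_i\subseteq[0,\pi)$ of angles for qubit $i$. For a three-qubit state $|\psi\rangle$, the event $(A,B,C)\to(a,b,c)$ is impossible if $(\langle A+a\pi|\otimes\langle B+b\pi|\otimes\langle C+c\pi|)|\psi\rangle=0$. Equivalence: $(|\psi\rangle,\mathcal{M})$ and $(|\psi'\rangle,\mathcal{M}')$ are equivalent if, after possibly permuting qubit labels, there is a local unitary $U=U_1\otimes U_2\otimes U_3$ with $U|\psi\rangle=|\psi'\rangle$ and $\{\varphi'\bmod\pi: U_iE_\varphi U_i^\dagger=\pm E_{\varphi'},\varphi\in M_i\}=M'_i$ for each $i$. For $\lambda\in[0,\frac{\pi}{2})$,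 $|v_\lambda\rangle=\cos\frac{\lambda}{2}|0\rangle+\sin\frac{\lambda}{2}|1\rangle$, $|w_\lambda\rangle=\sin\frac{\lambda}{2}|0\rangle+\cos\frac{\lambda}{2}|1\rangle$, $|B(\lambda)\rangle=\frac{1}{\sqrt2}(|00\rangle|v_\lambda\rangle+|11\rangle|w_\lambda\rangle)$. Define modulo $2\pi$: $\beta(\lambda,\varphi)=\varphi-2\arctan\left(\frac{\cos\frac{\lambda}{2}\sin\varphi}{\sin\frac{\lambda}{2}+\cos\frac{\lambda}{2}\cos\varphi}\right)$. For $|B(\lambda)\rangle$, $(A,B,C)\to(a,b,c)$ is impossible iff $A+B\equiv\beta(\lambda,C+c\pi)+(1\oplus a\oplus b)\pi$. $(|B(\lambda)\rangle,\mathcal{M})$ is maximally impossible if for every $C\in M_3$ and $z\in\{0,1\}$: every $A\in M_1$ admits $B\in M_2$, $a,b$ with $(A,B,C)\to(a,b,z)$ impossible, and every $B\in M_2$ admits $A\in M_1$, $a,b$ with $(A,B,C)\to(a,b,z)$ impossible. Then $|M_1|=|M_2|=:N$; write $M_1=\{A_0,\dots,A_{N-1}\}$, $M_2=\{B_0,\dots,B_{N-1}\}$, $M_3=\{C_0,\dots,C_{n-1}\}$; for each $(j,l,z)$ there is a unique $k=:K(j,l,z)$ with $A_j+B_k-\beta(\lambda,C_l+z\pi)$ an integer multiple of $\pi$, and $r(j,l,z)\in\{0,1\}$ is defined by $A_j+B_{K(j,l,z)}-\beta(\lambda,C_l+z\pi)\equiv r(j,l,z)\pi$. $\Psi_l(z)$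 is the $\mathbb{Z}_2$-linear system $\{a_j\oplus b_{K(j,l,z)}=r(j,l,z):j=0,\dots,N-1\}$ in unknowns $a_0,\dots,a_{N-1},b_0,\dots,b_{N-1}$. With $n=2$, maximal rank means for all $z_0,z_1$ the coefficient matrix of $\Psi_0(z_0)\cup\Psi_1(z_1)$ has rank $2N-1$ over $\mathbb{Z}_2$. $N$-regular: maximally impossible and of maximal rank, with $|M_1|=|M_2|=N$ and $M_3=\{C_0,C_1\}$. *)

(* Defs.v *)
From HB Require Import structures.
From mathcomp Require Import all_boot all_order all_algebra all_fingroup.
From mathcomp Require Import reals trigo.
From mathcomp Require Import complex.

Set Implicit Arguments.
Unset Strict Implicit.
Unset Printing Implicit Defensive.

Import Order.TTheory GRing.Theory Num.Theory.
Local Open Scope ring_scope.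

Section Defs.
Variable R : realType.
Local Notation C := (R[i]).

Definition modpi (x : R) : R := x - (Num.floor (x / pi))%:~R * pi.

Definition int_mul_pi (x : R) : Prop := exists k : int, x = k%:~R * pi.

(** beta(lambda, phi) = phi - 2 arctan( cos(l/2) sin phi / (sin(l/2) + cos(l/2) cos phi) )
    (mod 2pi); when the denominator vanishes the fraction is +-infinity and
    2 arctan(+-infinity) = +-pi, i.e. beta = phi - pi (mod 2 pi). *)
Definition beta (lam phi : R) : R :=
  let num := cos (lam / 2) * sin phi in
  let den := sin (lam / 2) + cos (lam / 2) * cos phi in
  if den == 0 then phi - pi else phi - 2 * atan (num / den).

Definition expi (phi : R) : C := Complex (cos phi) (sin phi).

Definition sqrt2C : C := (Num.sqrt (2 : R))%:C%C.

(** |phi> = (|0> + e^{i phi}|1>)/sqrt 2, the +1 eigenvector of E_phi *)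
Definition ket (phi : R) (x : 'I_2) : C :=
  if x == ord0 then 1 / sqrt2C else expi phi / sqrt2C.

(** E_phi = cos phi X + sin phi Y *)
Definition Emx (phi : R) : 'M[C]_2 :=
  \matrix_(i < 2, j < 2)
    (if i == j then 0 else if i == ord0 then conjc (expi phi) else expi phi).

Definition adjmx (U : 'M[C]_2) : 'M[C]_2 := map_mx conjc U^T.
Definition unitary (U : 'M[C]_2) : Prop := U *m adjmx U = 1%:M.

(** three-qubit states: amplitudes indexed by computational basis strings
    (qubit i |-> bit f i) *)
Definition state := {ffun 'I_3 -> 'I_2} -> C.

(** amplitude (<A+a pi| (x) <B+b pi| (x) <C+c pi|) |psi>, with
    ang = (A,B,C) and out = (a,b,c) *)
Definition ampl (psi : state) (ang : 'I_3 -> R) (out : 'I_3 -> bool) : C :=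
  \sum_(f : {ffun 'I_3 -> 'I_2})
     (\prod_(i < 3) conjc (ket (ang i + (out i)%:R * pi) (f i))) * psi f.

Definition angs (A B C0 : R) : 'I_3 -> R :=
  fun i => if val i == 0%N then A else if val i == 1%N then B else C0.
Definition outs (a b c : bool) : 'I_3 -> bool :=
  fun i => if val i == 0%N then a else if val i == 1%N then b else c.

Definition impossible (psi : state) (A B C0 : R) (a b c : bool) : Prop :=
  ampl psi (angs A B C0) (outs a b c) = 0.

Definition vl (lam : R) (x : 'I_2) : C :=
  if x == ord0 then (cos (lam / 2))%:C%C else (sin (lam / 2))%:C%C.
Definition wl (lam : R) (x : 'I_2) : C :=
  if x == ord0 then (sin (lam / 2))%:C%C else (cos (lam / 2))%:C%C.

Definition Bstate (lam : R) : state := fun f =>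
  (1 / sqrt2C) *
  ((if (f (inord 0) == ord0) && (f (inord 1) == ord0) then vl lam (f (inord 2)) else 0) +
   (if (f (inord 0) == ord_max) && (f (inord 1) == ord_max) then wl lam (f (inord 2)) else 0)).

(** a measurement scenario: finite sets of angles in [0, pi)
    (represented by duplicate-free lists) *)
Definition scenario (M : seq R) : Prop :=
  uniq M /\ forall x, x \in M -> 0 <= x < pi.

Definition max_impossible (lam : R) (M1 M2 M3 : seq R) : Prop :=
  forall C0, C0 \in M3 -> forall z : bool,
    (forall A, A \in M1 -> exists B, B \in M2 /\
        exists a b, impossible (Bstate lam) A B C0 a b z) /\
    (forall B, B \in M2 -> exists A, A \in M1 /\
        exists a b, impossible (Bstate lam) A B C0 a b z).

(** coefficient matrix over Z_2 of Psi_0(z0) u Psi_1(z1): unknowns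
    a_0..a_{N-1}, b_0..b_{N-1}; the equation a_j + b_{K_l(j)} = r gives the row
    e_{a_j} + e_{b_{K_l(j)}} *)
Definition coefmx (N : nat) (K0 K1 : 'I_N -> 'I_N) : 'M['F_2]_(N + N, N + N) :=
  \matrix_(i < N + N, c < N + N)
    match split i with
    | inl j => ((c == lshift N j) : nat)%:R + ((c == rshift N (K0 j)) : nat)%:R
    | inr j => ((c == lshift N j) : nat)%:R + ((c == rshift N (K1 j)) : nat)%:R
    end.

(** maximal rank (n = 2): for all z0, z1, with K(j,l,z) the unique k such that
    A_j + B_k - beta(l, C_l + z pi) is a multiple of pi, the coefficient matrix
    of Psi_0(z0) u Psi_1(z1) has rank 2N - 1 *)
Definition max_rank (lam : R) (N : nat) (A B : 'I_N -> R) (C0 C1 : R) : Prop :=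
  forall (z0 z1 : bool) (K0 K1 : 'I_N -> 'I_N),
    (forall j, int_mul_pi (A j + B (K0 j) - beta lam (C0 + z0%:R * pi))) ->
    (forall j, int_mul_pi (A j + B (K1 j) - beta lam (C1 + z1%:R * pi))) ->
    \rank (coefmx K0 K1) = (2 * N - 1)%N.

Definition N_regular (lam : R) (N : nat) (M1 M2 M3 : seq R) : Prop :=
  [/\ scenario M1, scenario M2 & scenario M3] /\
  [/\ size M1 = N, size M2 = N & size M3 = 2%N] /\
  max_impossible lam M1 M2 M3 /\
  max_rank lam (fun j : 'I_N => nth 0 M1 j) (fun k : 'I_N => nth 0 M2 k)
           (nth 0 M3 0) (nth 0 M3 1).

Definition apply_lu (U : 'I_3 -> 'M[C]_2) (psi : state) : state := fun f =>
  \sum_(g : {ffun 'I_3 -> 'I_2}) (\prod_(i < 3) U i (f i) (g i)) * psi g.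

(** relabelling of qubits: new qubit i is old qubit s i *)
Definition perm_state (s : 'S_3) (psi : state) : state := fun f =>
  psi [ffun j => f ((s^-1)%g j)].

Definition equivalent (psi : state) (M : 'I_3 -> seq R)
                      (psi' : state) (M' : 'I_3 -> seq R) : Prop :=
  exists (s : 'S_3) (U : 'I_3 -> 'M[C]_2),
    (forall i, unitary (U i)) /\
    (forall f, apply_lu U (perm_state s psi) f = psi' f) /\
    (forall i x, x \in M' i <->
       exists phi, phi \in M (s i) /\
       exists phi', x = modpi phi' /\
         (U i *m Emx phi *m adjmx (U i) = Emx phi' \/
          U i *m Emx phi *m adjmx (U i) = - Emx phi')).

Definition scen3 (M1 M2 M3 : seq R) : 'I_3 -> seq R :=
  fun i => if val i == 0%N then M1 else if val i == 1%N then M2 else M3.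

End Defs.

(* Main.v *)
Require Import Defs.
From HB Require Import structures.
From mathcomp Require Import all_boot all_order all_algebra all_fingroup.
From mathcomp Require Import reals trigo.
From mathcomp Require Import complex.
Import Order.TTheory GRing.Theory Num.Theory.
Local Open Scope ring_scope.

From mathcomp Require Import ring lra zify.

Set Implicit Arguments.
Unset Strict Implicit.
Unset Printing Implicit Defensive.


Section Angles.
Variable R : realType.
Implicit Types x y : R.

Lemma imp0 : int_mul_pi (0 : R).
Proof. by exists 0; rewrite mul0r. Qed.

Lemma impD x y : int_mul_pi x -> int_mul_pi y -> int_mul_pi (x + y).
Proof. by move=> [k ->] [l ->]; exists (k + l); rewrite intrD mulrDl. Qed.

Lemma impN x : int_mul_pi x -> int_mul_pi (- x).
Proof. by move=> [k ->]; exists (- k); rewrite intrN mulNr. Qed.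

Lemma impB x y : int_mul_pi x -> int_mul_pi y -> int_mul_pi (x - y).
Proof. by move=> hx hy; apply: impD => //; apply: impN. Qed.

Lemma imp_int (k : int) : int_mul_pi (k%:~R * pi : R).
Proof. by exists k. Qed.

Lemma imp_nat (n : nat) : int_mul_pi (n%:R * pi : R).
Proof. by exists n; rewrite -pmulrn. Qed.

Lemma imp_eq x y : x = y -> int_mul_pi (x - y).
Proof. by move=> ->; rewrite subrr; apply: imp0. Qed.

Lemma imp_small x : - pi < x < pi -> int_mul_pi x -> x = 0.
Proof.
move=> /andP[h1 h2] [k hk]; subst x.
have pg := @pi_gt0 R.
have k1 : k%:~R < (1 : R).
  by rewrite -(ltr_pM2r pg) mul1r.
have k2 : (-1 : R) < k%:~R.
  by rewrite -(ltr_pM2r pg) mulN1r.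
have : (k < 1)%R by rewrite -(ltr_int R) .
have : (-1 < k)%R by rewrite -(ltr_int R).
move=> a b; have -> : k = 0 by lia.
by rewrite mul0r.
Qed.

Lemma sin_int_sq x (k : int) : sin (x + k%:~R * pi) ^+ 2 = sin x ^+ 2.
Proof.
case: k => n.
  rewrite -pmulrn mulr_natl (alternatingn (@sinDpi R)).
  by rewrite exprMn -exprM mulnC exprM sqrrN !expr1n mul1r.
rewrite NegzE intrN mulNr.
have := alternatingn (@sinDpi R) n.+1 (x - n.+1%:R * pi).
rewrite mulr_natl subrK => ->.
by rewrite exprMn -exprM mulnC exprM sqrrN !expr1n mul1r.
Qed.

Lemma sin_eq0_imp x : sin x = 0 -> int_mul_pi x.
Proof.
move=> hs.
have pg := @pi_gt0 R.
set k := Num.floor (x / pi).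
have hf := floor_itv (x / pi); rewrite -/k in hf.
case/andP: hf => f1 f2.
set y := x - k%:~R * pi.
have y0 : 0 <= y.
  by rewrite /y subr_ge0 -ler_pdivlMr.
have y1 : y < pi.
  have h : x < (k%:~R + 1) * pi.
    by rewrite -ltr_pdivrMr //; rewrite intrD in f2.
  rewrite /y; nra.
have sy : sin y = 0.
  have := sin_int_sq y k; rewrite /y subrK hs expr0n /= => /esym/eqP.
  by rewrite sqrf_eq0 => /eqP.
have : y = 0.
  case: (ltrgtP y 0) => // [hy|hy]; first by move: y0; rewrite leNgt hy.
  have := @sin_gt0_pi R y; rewrite hy y1 sy ltxx; by move=> /(_ isT).
by rewrite /y => /eqP; rewrite subr_eq0 => /eqP ->; exists k.
Qed.

Lemma modpi_range x : 0 <= modpi x < pi.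
Proof.
have pg := @pi_gt0 R.
have /andP[f1 f2] := floor_itv (x / pi).
rewrite /modpi subr_ge0 -ler_pdivlMr // f1 /=.
have h : x < ((Num.floor (x / pi))%:~R + 1) * pi.
  by rewrite -ltr_pdivrMr //; rewrite intrD in f2.
nra.
Qed.

Lemma modpi_imp x : int_mul_pi (x - modpi x).
Proof. by rewrite /modpi opprB addrC subrK; apply: imp_int. Qed.

Lemma modpi_eq x y : int_mul_pi (x - y) -> modpi x = modpi y.
Proof.
move=> h.
have /andP[a1 a2] := modpi_range x.
have /andP[b1 b2] := modpi_range y.
apply/eqP; rewrite -subr_eq0; apply/eqP; apply: imp_small.
  apply/andP; split; lra.
have -> : modpi x - modpi y = (x - y) - (x - modpi x) + (y - modpi y) by ring.
by apply: impD; [apply: impB|]; [| apply: modpi_imp| apply: modpi_imp].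
Qed.

Lemma modpi_id x : 0 <= x < pi -> modpi x = x.
Proof.
move=> /andP[a1 a2].
have /andP[b1 b2] := modpi_range x.
apply/eqP; rewrite -subr_eq0; apply/eqP; apply: imp_small.
  apply/andP; split; lra.
have := modpi_imp x => /impN; by rewrite opprB.
Qed.

Lemma imp_range_eq x y : 0 <= x < pi -> 0 <= y < pi -> int_mul_pi (x - y) -> x = y.
Proof.
move=> hx hy h; rewrite -(modpi_id hx) -(modpi_id hy); exact: modpi_eq.
Qed.

End Angles.


Section Amp.
Variable R : realType.
Local Notation C := (R[i]).

Lemma mulcE (a b c d : R) :
  (Complex a b) * (Complex c d) = Complex (a * c - b * d) (a * d + b * c) :> C.
Proof. by []. Qed.
Lemma addcE (a b c d : R) :
  (Complex a b) + (Complex c d) = Complex (a + c) (b + d) :> C.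
Proof. by []. Qed.

Definition hh (ph : 'I_3 -> R) (i : 'I_3) (x : 'I_2) : C := conjc (ket (ph i) x).
Definition h1 (lam : R) (ph : 'I_3 -> R) (i : 'I_3) (x : 'I_2) : C :=
  if val i == 2%N then hh ph i x * vl lam x else if x == ord0 then hh ph i x else 0.
Definition h2 (lam : R) (ph : 'I_3 -> R) (i : 'I_3) (x : 'I_2) : C :=
  if val i == 2%N then hh ph i x * wl lam x else if x == ord_max then hh ph i x else 0.

Lemma ampl_expand (lam : R) (ang : 'I_3 -> R) (out : 'I_3 -> bool) :
  let ph i := ang i + (out i)%:R * pi in
  ampl (Bstate lam) ang out =
  (1 / sqrt2C R) * (\prod_i \sum_x h1 lam ph i x + \prod_i \sum_x h2 lam ph i x).
Proof.
move=> ph.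
rewrite !bigA_distr_bigA -big_split mulr_sumr /ampl; apply: eq_bigr => f _.
rewrite /Bstate.
have e0 : (inord 0 : 'I_3) = ord0 by apply/val_inj; rewrite /= inordK.
have e1 : (inord 1 : 'I_3) = lift ord0 ord0 by apply/val_inj; rewrite /= inordK.
have e2 : (inord 2 : 'I_3) = lift ord0 (lift ord0 ord0) by apply/val_inj; rewrite /= inordK.
rewrite e0 e1 e2 !big_ord_recl !big_ord0.
rewrite /h1 /h2 /=.
rewrite -/(hh ph ord0 (f ord0)).
move: (f ord0) (f (lift ord0 ord0)) (f (lift ord0 (lift ord0 ord0))) => x0 x1 x2.
set a0 := hh ph ord0 x0.
rewrite -[(ket _ x1)^*%C]/(hh ph (lift ord0 ord0) x1).
rewrite -[(ket _ x2)^*%C]/(hh ph (lift ord0 (lift ord0 ord0)) x2).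
have two (x : 'I_2) : x = ord0 \/ x = ord_max.
  by case: x => [[|[|//]] p]; [left|right]; apply/val_inj.
by case: (two x0) => ->; case: (two x1) => ->; rewrite /= ?mulr0 ?mul0r ?addr0 ?add0r ?mulr1; ring.
Qed.


Definition rt : R := Num.sqrt 2.

Lemma rt_gt0 : 0 < rt. Proof. by rewrite /rt sqrtr_gt0. Qed.

Lemma inv_sqrt2C : 1 / sqrt2C R = ((1 / rt)%:C)%C.
Proof. by rewrite /sqrt2C !mul1r fmorphV. Qed.

Lemma conj_expi (p : R) : conjc (expi p) = expi (- p).
Proof. by rewrite /expi cosN sinN. Qed.

Lemma expiD (p q : R) : expi p * expi q = expi (p + q).
Proof. by rewrite /expi mulcE cosD sinD; congr Complex; ring. Qed.

Lemma realCE (a : R) : ((a%:C)%C : C) = Complex a 0.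
Proof. by []. Qed.

Lemma hhE ph i (x : 'I_2) :
  hh ph i x = ((1 / rt)%:C)%C * (if x == ord0 then 1 else expi (- ph i)).
Proof.
rewrite /hh /ket; case: (x == ord0).
  rewrite mulr1 /sqrt2C !mul1r -fmorphV /rt; move: (Num.sqrt 2 : R)^-1 => a.
  by rewrite !realCE /=; congr Complex; rewrite oppr0.
rewrite /sqrt2C -fmorphV /rt mul1r.
move: (Num.sqrt 2 : R)^-1 => a.
rewrite /expi !realCE !mulcE /=. congr Complex; rewrite cosN sinN; ring.
Qed.

Lemma prod3 (F : 'I_3 -> C) : \prod_i F i = F ord0 * F (lift ord0 ord0) * F (lift ord0 (lift ord0 ord0)).
Proof. by rewrite !big_ord_recl big_ord0 mulr1 mulrA. Qed.

Lemma sum2 (F : 'I_2 -> C) : \sum_i F i = F ord0 + F ord_max.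
Proof. rewrite !big_ord_recl big_ord0 addr0; congr (_ + F _); exact/val_inj. Qed.


Lemma ampl_formula (lam A B C0 : R) (a b c : bool) :
  let cs := (cos (lam / 2)) in let sn := sin (lam / 2) in
  let g := C0 + c%:R * pi in
  ampl (Bstate lam) (angs A B C0) (outs a b c) =
  ((1 / rt)%:C)%C ^+ 4 *
  ((cs%:C)%C + (sn%:C)%C * expi (- g) +
   expi (- ((A + a%:R * pi) + (B + b%:R * pi))) * ((sn%:C)%C + (cs%:C)%C * expi (- g))).
Proof.
move=> cs sn g.
rewrite ampl_expand !prod3 !sum2 /h1 /h2 /= !hhE /vl /wl /= /angs /outs /=.
rewrite inv_sqrt2C.
rewrite (opprD (A + _)) -(expiD (- (A + _))).
move: ((1 / rt)%:C)%C (expi (- (A + _))) (expi (- (B + _))) (expi (- g)) => k e0 e1 e2.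
move: (cs%:C)%C (sn%:C)%C => x y.
ring.
Qed.


Lemma ampl_comp (lam A B C0 : R) (a b c : bool) :
  let cs := (cos (lam / 2)) in let sn := sin (lam / 2) in
  let g := C0 + c%:R * pi in let th := (A + a%:R * pi) + (B + b%:R * pi) in
  impossible (Bstate lam) A B C0 a b c ->
  cs + sn * cos g + sn * cos th + cs * (cos th * cos g - sin th * sin g) = 0 /\
  sn * sin g + sn * sin th + cs * (sin th * cos g + cos th * sin g) = 0.
Proof.
move=> cs sn g th; rewrite /impossible ampl_formula -/cs -/sn -/g -/th.
move/eqP; rewrite mulf_eq0 expf_eq0 /= => /orP[|].
  rewrite realCE => /eqP [] /eqP; rewrite mul1r invr_eq0.
  by have := rt_gt0; rewrite lt0r => /andP[/negPf ->].
rewrite /expi !realCE !mulcE !addcE !cosN !sinN => /eqP [] h1 h2.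
split.
  by rewrite -h1; ring.
by apply/eqP; rewrite -oppr_eq0; apply/eqP; rewrite -h2; ring.
Qed.


Lemma cos_sin_half (lam : R) : 0 <= lam < pi / 2 ->
  0 <= sin (lam / 2) /\ sin (lam / 2) < cos (lam / 2) /\
  cos (lam / 2) ^+ 2 + sin (lam / 2) ^+ 2 = 1.
Proof.
move=> /andP[l0 l1].
have pg := @pi_gt0 R.
have s0 : 0 <= sin (lam / 2) by apply: sin_ge0_pi; apply/andP; split; lra.
have c0 : 0 < cos (lam / 2) by apply: cos_gt0_pihalf; apply/andP; split; lra.
have cl : 0 < cos lam by apply: cos_gt0_pihalf; apply/andP; split; lra.
have e : cos lam = cos (lam / 2) ^+ 2 - sin (lam / 2) ^+ 2.
  have {1}-> : lam = lam / 2 + lam / 2 by lra.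
  by rewrite cosD; ring.
have := cos2Dsin2 (lam / 2) => h.
split => //; split => //; nra.
Qed.

Lemma imp_beta (lam A B C0 : R) (a b c : bool) : 0 <= lam < pi / 2 ->
  impossible (Bstate lam) A B C0 a b c ->
  int_mul_pi (A + B - beta lam (C0 + c%:R * pi)).
Proof.
move=> hl himp.
have := ampl_comp himp.
set cs := cos (lam / 2); set sn := sin (lam / 2).
have [s0 [sc cs1]] : 0 <= sn /\ sn < cs /\ cs ^+ 2 + sn ^+ 2 = 1 := cos_sin_half hl.
set g := C0 + c%:R * pi; set th := (A + a%:R * pi) + (B + b%:R * pi).
move=> [Re0 Im0].
have gh : cos g ^+ 2 + sin g ^+ 2 = 1 by apply: cos2Dsin2.
set D := sn + cs * cos g; set E := cs * sin g.
set p := cos g * cos th + sin g * sin th; set q := sin g * cos th - cos g * sin th.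
set Q := D ^+ 2 + E ^+ 2.
have Qpos : 0 < Q.
  have gm : -1 <= cos g by apply: cos_geN1.
  have : Q - (sn ^+ 2 + cs ^+ 2 + 2 * sn * cs * cos g) = cs ^+ 2 * (cos g ^+ 2 + sin g ^+ 2 - 1).
    by rewrite /Q /D /E; ring.
  rewrite gh subrr mulr0 => /eqP; rewrite subr_eq0 => /eqP ->.
  have h1 : 0 <= sn * cs * (1 + cos g).
    by apply: mulr_ge0; [apply: mulr_ge0|]; lra.
  have h2 : 0 < (cs - sn) ^+ 2 by apply: exprn_gt0; lra.
  have -> : sn ^+ 2 + cs ^+ 2 + 2 * sn * cs * cos g = (cs - sn) ^+ 2 + 2 * (sn * cs * (1 + cos g)) by ring.
  lra.
have P1 : p * D + q * E + D = 0.
  have -> : p * D + q * E + D = cos g * (cs + sn * cos g + sn * cos th + cs * (cos th * cos g - sin th * sin g))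
      + sin g * (sn * sin g + sn * sin th + cs * (sin th * cos g + cos th * sin g))
      - sn * (cos g ^+ 2 + sin g ^+ 2 - 1).
    by rewrite /p /q /D /E; ring.
  by rewrite Re0 Im0 gh; ring.
have P2 : q * D - p * E + E = 0.
  have -> : q * D - p * E + E = sin g * (cs + sn * cos g + sn * cos th + cs * (cos th * cos g - sin th * sin g))
      - cos g * (sn * sin g + sn * sin th + cs * (sin th * cos g + cos th * sin g))
      by rewrite /p /q /D /E; ring.
  by rewrite Re0 Im0; ring.
have hq : q * Q = - (2 * D * E).
  have : E * (p * D + q * E + D) + D * (q * D - p * E + E) = 0 by rewrite P1 P2; ring.
  by rewrite /Q => h; apply/eqP; rewrite -subr_eq0 -h; apply/eqP; ring.
have hp : p * Q = E ^+ 2 - D ^+ 2.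
  have : D * (p * D + q * E + D) - E * (q * D - p * E + E) = 0 by rewrite P1 P2; ring.
  by rewrite /Q => h; apply/eqP; rewrite -subr_eq0 -h; apply/eqP; ring.
have sthg : sin (th - g) = - q by rewrite sinB /q; ring.
have cthg : cos (th - g) = p by rewrite cosB /p; ring.
suff hs : sin (th - beta lam g) = 0.
  have -> : A + B - beta lam g = (th - beta lam g) - a%:R * pi - b%:R * pi by rewrite /th; ring.
  by apply: impB; [apply: impB|]; [apply: sin_eq0_imp | apply: imp_nat | apply: imp_nat].
rewrite /beta -/cs -/sn -/D -/E.
have Qn : Q != 0 by rewrite gt_eqF.
case: eqP => hD.
  have -> : th - (g - pi) = (th - g) + pi by ring.
  rewrite sinDpi sthg opprK.
  have : q * Q = 0 by rewrite hq hD; ring.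
  by move/eqP; rewrite mulf_eq0 (negPf Qn) orbF => /eqP.
set t := E / D.
have ca0 : cos (atan t) != 0.
  by rewrite cos_atan invr_eq0 gt_eqF // sqrtr_gt0; have := sqr_ge0 t; lra.
have sa : sin (atan t) = t * cos (atan t).
  by rewrite -[X in X * cos _](atanK t) /tan mulfVK.
have ca2 : cos (atan t) ^+ 2 = (1 + t ^+ 2)^-1.
  rewrite cos_atan exprVn sqr_sqrtr //; have := sqr_ge0 t; lra.
have -> : th - (g - 2 * atan t) = (th - g) + (atan t + atan t) by ring.
rewrite sinD (cosD (atan t)) (sinD (atan t)) sthg cthg sa.
have -> : - q * (cos (atan t) * cos (atan t) - t * cos (atan t) * (t * cos (atan t))) +
  p * (t * cos (atan t) * cos (atan t) + cos (atan t) * (t * cos (atan t))) =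
  cos (atan t) ^+ 2 * (- q * (1 - t ^+ 2) + 2 * t * p) by ring.
suff -> : - q * (1 - t ^+ 2) + 2 * t * p = 0 by rewrite mulr0.
have hD' : D != 0 by apply/eqP.
have e1 : (- q * (1 - t ^+ 2) + 2 * t * p) * (D ^+ 2 * Q) = - (q * Q) * (D ^+ 2 - E ^+ 2) + 2 * D * E * (p * Q).
  by rewrite /t; field.
have : (- q * (1 - t ^+ 2) + 2 * t * p) * (D ^+ 2 * Q) = 0 by rewrite e1 hq hp; ring.
by move/eqP; rewrite mulf_eq0 mulf_eq0 expf_eq0 /= (negPf hD') (negPf Qn) /= orbF => /eqP.
Qed.

End Amp.


Section Rank.
Variable N : nat.

Lemma split_l (j : 'I_N) : split (lshift N j) = inl j.
Proof. exact: (unsplitK (inl j)). Qed.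
Lemma split_r (j : 'I_N) : split (rshift N j) = inr j.
Proof. exact: (unsplitK (inr j)). Qed.

Lemma F2xx (x : 'F_2) : x + x = 0.
Proof. by rewrite -mulr2n -mulr_natr (@pchar_Fp_0 2) // mulr0. Qed.

Lemma sum_pick (v : 'I_(N + N) -> 'F_2) (a : 'I_(N + N)) :
  \sum_c v c * ((c == a) : nat)%:R = v a.
Proof.
rewrite (bigD1 a) //= eqxx mulr1 big1 ?addr0 // => c /negPf ->.
by rewrite mulr0.
Qed.

Lemma ker_vec (K0 K1 : 'I_N -> 'I_N) (v : 'rV['F_2]_(N + N)) :
  (forall j, v 0 (lshift N j) = v 0 (rshift N (K0 j))) ->
  (forall j, v 0 (lshift N j) = v 0 (rshift N (K1 j))) ->
  v *m (coefmx K0 K1)^T = 0.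
Proof.
move=> h0 h1; apply/rowP => i; rewrite !mxE.
under eq_bigr do rewrite !mxE.
case: splitP => j _;
  under eq_bigr do rewrite mulrDr; rewrite big_split /= !sum_pick.
  by rewrite h0 F2xx.
by rewrite h1 F2xx.
Qed.

Lemma rank_le (K0 K1 sg : 'I_N -> 'I_N) (S : pred 'I_N) (j0 j1 : 'I_N) :
  (forall j, sg (K1 j) = j) -> (forall j, S (sg (K0 j)) = S j) -> S j0 -> ~~ S j1 ->
  (\rank (coefmx K0 K1) <= (N + N) - 2)%N.
Proof.
move=> hsg hS s0 s1.
pose w := \row_(c < N + N) ((match split c with inl j => S j | inr k => S (sg k) end : nat)%:R : 'F_2).
pose u := \row_(c < N + N) (1 : 'F_2).
have hw : (w <= kermx (coefmx K0 K1)^T)%MS.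
  apply/sub_kermxP; apply: ker_vec => j; rewrite !mxE split_l split_r //.
  by rewrite hS.
  by rewrite hsg.
have hu : (u <= kermx (coefmx K0 K1)^T)%MS.
  by apply/sub_kermxP; apply: ker_vec => j; rewrite !mxE.
have r1 : \rank u = 1%N.
  apply/eqP; rewrite eqn_leq rank_leq_row lt0n mxrank_eq0.
  apply/eqP => /rowP /(_ (lshift N j0)); rewrite !mxE => /eqP.
  by rewrite oner_eq0.
have lt : (u < u + w)%MS.
  rewrite ltmxE addsmxSl /=; apply/negP => h.
  have : (w <= u)%MS by apply: submx_trans (addsmxSr u w) h.
  case/sub_rVP => a ha.
  have e1 := congr1 (fun M : 'rV_(N + N) => M 0 (lshift N j1)) ha.
  have e0 := congr1 (fun M : 'rV_(N + N) => M 0 (lshift N j0)) ha.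
  move: e0 e1; rewrite /= !mxE !split_l s0 (negPf s1) /= mulr1 => <-.
  by move/eqP; rewrite eq_sym oner_eq0.
have := rank_ltmx lt; rewrite r1 => r2.
have sub : (u + w <= kermx (coefmx K0 K1)^T)%MS by rewrite addsmx_sub hu hw.
have := mxrankS sub; rewrite mxrank_ker mxrank_tr => r3.
lia.
Qed.

End Rank.


Section Core.
Variable R : realType.

Definition isgrid (N : nat) (z : R) := exists n : int, z = n%:~R * (pi / N%:R).

Section G.
Variable N : nat.
Hypothesis N0 : (0 < N)%N.

Lemma Nr0 : (N%:R : R) != 0. Proof. by rewrite pnatr_eq0 -lt0n. Qed.
Lemma Nrgt0 : (0 : R) < N%:R. Proof. by rewrite ltr0n. Qed.

Lemma grid0 : isgrid N 0. Proof. by rewrite /isgrid; exists 0; rewrite mul0r. Qed.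
Lemma gridD x y : isgrid N x -> isgrid N y -> isgrid N (x + y).
Proof. move=> [a ->] [b ->]; rewrite /isgrid. exists (a + b). rewrite intrD. ring. Qed.
Lemma gridN x : isgrid N x -> isgrid N (- x).
Proof. by move=> [a ->]; rewrite /isgrid; exists (- a); rewrite intrN mulNr. Qed.
Lemma gridB x y : isgrid N x -> isgrid N y -> isgrid N (x - y).
Proof. by move=> hx hy; apply: gridD => //; apply: gridN. Qed.
Lemma grid_imp x : int_mul_pi x -> isgrid N x.
Proof.
move=> [t ->]; rewrite /isgrid; exists (t * N%:Z); rewrite intrM.
rewrite -[(N%:Z)%:~R]/(N%:R : R); field; exact: Nr0.
Qed.
Lemma grid_natM (k : nat) x : isgrid N x -> isgrid N (k%:R * x).
Proof.
move=> [a ->]; rewrite /isgrid; exists (k%:Z * a); rewrite intrM mulrA; congr (_ * _ * _).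
Qed.

Lemma grid_norm x : exists c, 0 <= c < pi / N%:R /\ isgrid N (x - c).
Proof.
have hp : 0 < pi / N%:R :> R by rewrite divr_gt0 ?pi_gt0 ?Nrgt0.
set u := pi / N%:R.
have /andP[f1 f2] := floor_itv (x / u).
exists (x - (Num.floor (x / u))%:~R * u); split.
  apply/andP; split.
    by rewrite subr_ge0 -ler_pdivlMr.
  have h : x < ((Num.floor (x / u))%:~R + 1) * u.
    by rewrite -ltr_pdivrMr //; rewrite intrD in f2.
  nra.
by rewrite opprB addrC subrK /isgrid; exists (Num.floor (x / u)).
Qed.

End G.

Lemma core (N : nat) (A B : 'I_N -> R) (K0 K1 : 'I_N -> 'I_N) (b0 b1 : R) :
  (0 < N)%N ->
  (forall j, 0 <= A j < pi) -> injective A ->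
  (forall k, 0 <= B k < pi) -> injective B ->
  (forall j, int_mul_pi (A j + B (K0 j) - b0)) ->
  (forall j, int_mul_pi (A j + B (K1 j) - b1)) ->
  \rank (coefmx K0 K1) = (2 * N - 1)%N ->
  exists c c', (0 <= c < pi / N%:R /\ 0 <= c' < pi / N%:R) /\
    ((forall j, isgrid N (A j - c)) /\ (forall k, isgrid N (B k - c'))).
Proof.
move=> N0 hA iA hB iB h0 h1 hr.
have inj_of (K : 'I_N -> 'I_N) b : (forall j, int_mul_pi (A j + B (K j) - b)) -> injective K.
  move=> hK j j' e; apply: iA; apply: imp_range_eq; [exact: hA|exact: hA|].
  have -> : A j - A j' = (A j + B (K j) - b) - (A j' + B (K j') - b) by rewrite e; ring.
  exact: impB.
have i0 := inj_of _ _ h0; have i1 := inj_of _ _ h1.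
pose sg := invF i1.
pose tau := fun j => sg (K0 j).
have hsg j : sg (K1 j) = j by apply: invF_f.
have htau j : int_mul_pi (A (tau j) - A j - (b1 - b0)).
  have e : K1 (tau j) = K0 j by rewrite /tau /sg f_invF.
  have := h1 (tau j); rewrite e => ha.
  have -> : A (tau j) - A j - (b1 - b0) = (A (tau j) + B (K0 j) - b1) - (A j + B (K0 j) - b0) by ring.
  exact: impB.
have itau : injective tau by move=> x y /(congr1 K1); rewrite /tau /sg !f_invF => /i0.
set j0 : 'I_N := Ordinal N0.
have allc j : fconnect tau j0 j.
  apply/negPn/negP => hj.
  have := @rank_le N K0 K1 sg (fconnect tau j0) j0 j hsg
    (fun j => esym (same_fconnect1_r itau j0 j)) (connect0 _ j0) hj.
  rewrite hr.
  lia.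
set d := b1 - b0.
have I1 k : int_mul_pi (A (iter k tau j0) - A j0 - k%:R * d).
  elim: k => [|k ih]; first by rewrite /= mul0r !subrr; apply: imp0.
  have -> : A (iter k.+1 tau j0) - A j0 - k.+1%:R * d =
    (A (tau (iter k tau j0)) - A (iter k tau j0) - d) + (A (iter k tau j0) - A j0 - k%:R * d).
    by rewrite /= -addn1 natrD; ring.
  exact: impD.
have ord : fingraph.order tau j0 = N.
  rewrite /order -[RHS]card_ord; apply: eq_card => j; rewrite inE /=.
  by rewrite allc.
have dg : isgrid N d.
  have := I1 (fingraph.order tau j0); rewrite iter_order // ord subrr add0r => /impN; rewrite opprK.
  move=> [t ht]; rewrite /isgrid; exists t; apply: (mulfI (Nr0 N0)); rewrite ht.
  by field; exact: Nr0.
have gA j : isgrid N (A j - A j0).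
  rewrite -(iter_findex (allc j)).
  set k := findex tau j0 j.
  have -> : A (iter k tau j0) - A j0 = (A (iter k tau j0) - A j0 - k%:R * d) + k%:R * d by ring.
  apply: gridD; [exact: grid_imp | exact: grid_natM].
have [c [hc gc]] := grid_norm N0 (A j0).
have [c' [hc' gc']] := grid_norm N0 (b0 - c).
exists c, c'; split; first by split.
have gA' j : isgrid N (A j - c).
  have -> : A j - c = (A j - A j0) + (A j0 - c) by ring.
  exact: gridD.
split => // k.
pose j := invF i0 k.
have -> : k = K0 j by rewrite /j f_invF.
have -> : B (K0 j) - c' = (A j + B (K0 j) - b0) - (A j - c) + (b0 - c - c') by ring.
apply: gridD => //; apply: gridB => //; exact: grid_imp.
Qed.

End Core.


Section Even.
Variable R : realType.

Definition Tseq (N : nat) (c : R) : seq R := [seq c + k%:R * (pi / N%:R) | k <- iota 0 N].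

Lemma Tseq_sorted N c : (0 < N)%N -> sorted <%R (Tseq N c).
Proof.
move=> N0; have u0 : 0 < pi / N%:R :> R by rewrite divr_gt0 ?pi_gt0 ?ltr0n.
apply: (homo_sorted (e := ltn)); last exact: iota_ltn_sorted.
move=> x y xy; rewrite ltrD2l ltr_pM2r // ltr_nat //.
Qed.

Lemma Tseq_nth N c i : (i < N)%N -> nth 0 (Tseq N c) i = c + i%:R * (pi / N%:R).
Proof. by move=> h; rewrite /Tseq (nth_map 0%N) ?size_iota // nth_iota. Qed.

Lemma even_seq N (S : seq R) c : (0 < N)%N -> uniq S -> size S = N ->
  (forall y, y \in S -> 0 <= y < pi) -> 0 <= c < pi / N%:R ->
  (forall y, y \in S -> isgrid N (y - c)) ->
  S =i Tseq N c /\ sort <=%R S = Tseq N c.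
Proof.
move=> N0 uS sS hS hc hg.
have u0 : 0 < pi / N%:R :> R by rewrite divr_gt0 ?pi_gt0 ?ltr0n.
have piE : pi = N%:R * (pi / N%:R) :> R by field; rewrite pnatr_eq0 -lt0n.
have sub : {subset S <= Tseq N c}.
  move=> y yS; have [n hn] := hg y yS.
  have /andP[y0 y1] := hS y yS.
  case/andP: hc => c0 c1.
  have n1 : (-1 : R) < n%:~R by nra.
  have n2 : n%:~R < (N%:R : R) by nra.
  case: n hn n1 n2 => k hk n1 n2; last first.
    by move: n1; rewrite NegzE intrN ltrN2 -[1]/(1%:R : R) ltr_nat ltnS ltn0.
  apply/mapP; exists k; first by rewrite mem_iota add0n; move: n2; rewrite pmulrn ltr_nat.
  by rewrite pmulrn in hk; rewrite -hk; ring.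
have hsz : (size (Tseq N c) <= size S)%N by rewrite size_map size_iota sS.
have [sz eqS] := uniq_min_size uS sub hsz.
have sT := Tseq_sorted c N0.
have uT : uniq (Tseq N c) by apply: (sorted_uniq lt_trans ltxx).
split => //.
have pe : perm_eq S (Tseq N c) by apply: uniq_perm.
rewrite (perm_sortP le_total le_trans le_anti _ _ pe).
apply: sorted_sort; first exact: le_trans.
by apply: sub_sorted sT => x y /ltW.
Qed.

End Even.


Section Equiv.
Variable R : realType.
Local Notation C := (R[i]).

Lemma two (x : 'I_2) : x = ord0 \/ x = ord_max.
Proof. by case: x => [[|[|//]] p]; [left|right]; apply/val_inj. Qed.

Lemma expi0 : expi (0 : R) = 1.
Proof. by rewrite /expi cos0 sin0. Qed.

Lemma cplx1 : Complex (1 : R) 0 = 1 :> C. Proof. by []. Qed.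

Definition Ud (t : R) : 'M[C]_2 :=
  \matrix_(i < 2, j < 2) (if i == j then (if i == ord0 then 1 else expi t) else 0).

Lemma sum2' (F : 'I_2 -> C) : \sum_i F i = F ord0 + F ord_max.
Proof. rewrite !big_ord_recl big_ord0 addr0; congr (_ + F _); exact/val_inj. Qed.

Lemma Ud_unitary t : unitary (Ud t).
Proof.
rewrite /unitary /adjmx; apply/matrixP => i k; rewrite !mxE sum2' !mxE.
case: (two i) => ->; case: (two k) => -> /=; rewrite ?mulr0 ?mul0r ?addr0 ?add0r.
all: rewrite ?oppr0 ?mul1r ?mulr1 ?mul0r ?mulr0 //.
rewrite /expi mulcE -cplx1; have := cos2Dsin2 t; rewrite !expr2 => h.
by congr Complex; [rewrite -h|]; ring.
Qed.

Lemma Ud_conj t p : Ud t *m Emx p *m adjmx (Ud t) = Emx (p + t).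
Proof.
apply/matrixP => i k; rewrite /adjmx !mxE sum2' !mxE !sum2' !mxE.
case: (two i) => ->; case: (two k) => -> /=.
all: rewrite ?oppr0 ?mul1r ?mulr1 ?mul0r ?mulr0 ?addr0 ?add0r //.
- by rewrite mulcE cosD sinD; congr Complex; ring.
- by rewrite expiD addrC.
- by rewrite mul0r.
Qed.

Lemma Emx_modpi (p q : R) : Emx p = Emx q \/ Emx p = - Emx q -> modpi p = modpi q.
Proof.
move=> h; apply: (@modpi_eq R); apply: sin_eq0_imp.
have : expi p = expi q \/ expi p = - expi q.
  case: h => [e|e]; [left|right];
  by have := congr1 (fun M : 'M[C]_2 => M ord_max ord0) e; rewrite !mxE /=.
rewrite sinB /expi; case=> [[-> ->]|]; first by ring.
move=> e; have : (cos p +i* sin p)%C = ((- cos q) +i* (- sin q))%C by rewrite e.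
by case=> -> ->; ring.
Qed.


Definition thf (t : R) (i : 'I_3) : R :=
  if val i == 0%N then - t else if val i == 1%N then t else 0.

Lemma lu_B (lam t : R) f :
  apply_lu (fun i => Ud (thf t i)) (perm_state 1 (Bstate lam)) f = Bstate lam f.
Proof.
rewrite /apply_lu /perm_state.
have pf (g : {ffun 'I_3 -> 'I_2}) : [ffun j => g ((1 : 'S_3)^-1 j)%g] = g.
  by apply/ffunP => j; rewrite ffunE invg1 perm1.
under eq_bigr do rewrite pf.
rewrite (bigD1 f) //= [X in _ + X]big1 ?addr0; last first.
  move=> g hg.
  have : [exists i, f i != g i].
    apply: contraR hg; rewrite negb_exists => /forallP h.
    by apply/eqP/ffunP => i; apply/eqP; move: (h i); rewrite negbK eq_sym.
  case/existsP => i hi.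
  by rewrite (bigD1 i) //= mxE (negPf hi) !mul0r.
rewrite !big_ord_recl big_ord0 mulr1 !mxE !eqxx /=.
rewrite /Bstate.
have e0 : (inord 0 : 'I_3) = ord0 by apply/val_inj; rewrite /= inordK.
have e1 : (inord 1 : 'I_3) = lift ord0 ord0 by apply/val_inj; rewrite /= inordK.
have e2 : (inord 2 : 'I_3) = lift ord0 (lift ord0 ord0) by apply/val_inj; rewrite /= inordK.
rewrite e0 e1 e2 /thf /=.
move: (f ord0) (f (lift ord0 ord0)) (f (lift ord0 (lift ord0 ord0))) => x0 x1 x2.
case: (two x0) => ->; case: (two x1) => ->; case: (two x2) => -> /=;
  rewrite ?expi0 ?mul1r ?mulr1 ?addr0 ?add0r ?mulr0 ?mul0r //.
all: by rewrite expiD addNr expi0 mul1r.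
Qed.


Lemma equiv_crit (lam t : R) (M M' : 'I_3 -> seq R) :
  (forall i x, x \in M' i <-> exists phi, phi \in M i /\ x = modpi (phi + thf t i)) ->
  equivalent (Bstate lam) M (Bstate lam) M'.
Proof.
move=> h; exists 1%g, (fun i => Ud (thf t i)); split; first by move=> i; apply: Ud_unitary.
split; first by move=> f; apply: lu_B.
move=> i x; rewrite perm1 h; split.
  case=> phi [hphi ->]; exists phi; split => //; exists (phi + thf t i); split => //.
  by left; exact: Ud_conj.
case=> phi [hphi [phi' [-> hE]]]; exists phi; split => //.
apply: Emx_modpi; rewrite Ud_conj in hE.
case: hE => e; [left|right]; first by rewrite e.
by rewrite e opprK.
Qed.

End Equiv.


Section Final.
Variable R : realType.

Lemma ku_range (N k : nat) : (k < N)%N -> 0 <= k%:R * (@pi R / N%:R) < @pi R.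
Proof.
move=> kN; have N0 : (0 < N)%N by apply: leq_ltn_trans kN.
have u0 : 0 < pi / N%:R :> R by rewrite divr_gt0 ?pi_gt0 ?ltr0n.
have piE : pi = N%:R * (pi / N%:R) :> R by field; rewrite pnatr_eq0 -lt0n.
have kN' : k%:R < N%:R :> R by rewrite ltr_nat.
apply/andP; split; first by apply: mulr_ge0 => //; apply: ltW.
by rewrite [X in _ < X]piE ltr_pM2r.
Qed.

Lemma final_equiv (lam : R) N (M1 M2 M3 : seq R) (c c' : R) :
  M1 =i Tseq N c -> M2 =i Tseq N c' ->
  exists mu : R, 0 <= mu < pi /\
     exists M3' : seq R,
       equivalent (Bstate lam) (scen3 M1 M2 M3) (Bstate lam)
         (scen3 [seq k%:R * pi / N%:R | k <- iota 0 N]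
                [seq modpi (k%:R * pi / N%:R + mu) | k <- iota 0 N] M3').
Proof.
move=> e1 e2.
exists (modpi (c' + c)); split; first exact: modpi_range.
exists [seq modpi (phi + 0) | phi <- M3].
apply: (@equiv_crit R lam c) => i x.
case: i => [[|[|[|//]]] hi]; rewrite /scen3 /thf /=.
- split.
    case/mapP => k; rewrite mem_iota add0n => /andP[_ kN] ->.
    exists (c + k%:R * (pi / N%:R)); split.
      by rewrite e1; apply/mapP; exists k => //; rewrite mem_iota add0n.
    by rewrite addrC addKr modpi_id ?ku_range // mulrA.
  case=> phi [/[!e1] /mapP [k]]; rewrite mem_iota add0n => /andP[_ kN] -> ->.
  rewrite addrC addKr modpi_id ?ku_range //.
  by apply/mapP; exists k; rewrite ?mem_iota ?add0n // mulrA.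
- split.
    case/mapP => k; rewrite mem_iota add0n => /andP[_ kN] ->.
    exists (c' + k%:R * (pi / N%:R)); split.
      by rewrite e2; apply/mapP; exists k => //; rewrite mem_iota add0n.
    apply: modpi_eq.
    have -> : k%:R * pi / N%:R + modpi (c' + c) - (c' + k%:R * (pi / N%:R) + c)
      = - ((c' + c) - modpi (c' + c)) by rewrite mulrA; ring.
    by apply: impN; apply: modpi_imp.
  case=> phi [/[!e2] /mapP [k]]; rewrite mem_iota add0n => /andP[_ kN] -> ->.
  apply/mapP; exists k; first by rewrite mem_iota add0n.
  apply: modpi_eq.
  have -> : (c' + k%:R * (pi / N%:R) + c) - (k%:R * pi / N%:R + modpi (c' + c))
    = ((c' + c) - modpi (c' + c)) by rewrite mulrA; ring.
  by apply: modpi_imp.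
- split; first by case/mapP => phi hphi ->; exists phi.
  by case=> phi [hphi ->]; apply/mapP; exists phi.
Qed.

End Final.

Unset Implicit Arguments.
Set Strict Implicit.

Theorem lemma22 (R : realType) (lam : R) (N : nat) (M1 M2 M3 : seq R) :
  0 <= lam < pi / 2 ->
  N_regular lam N M1 M2 M3 ->
  (* evenly spaced modulo pi, adjacent angles differing by pi / N *)
  (forall i : nat, (i.+1 < N)%N ->
     nth 0 (sort <=%R M1) i.+1 - nth 0 (sort <=%R M1) i = pi / N%:R) /\
  (forall i : nat, (i.+1 < N)%N ->
     nth 0 (sort <=%R M2) i.+1 - nth 0 (sort <=%R M2) i = pi / N%:R) /\
  (* hence, up to equivalence, M1 = {k pi / N}, M2 = {k pi / N + mu mod pi} *)
  (exists mu : R, 0 <= mu < pi /\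
     exists M3' : seq R,
       equivalent (Bstate lam) (scen3 M1 M2 M3) (Bstate lam)
         (scen3 [seq k%:R * pi / N%:R | k <- iota 0 N]
                [seq modpi (k%:R * pi / N%:R + mu) | k <- iota 0 N] M3')).
Proof.
move=> hl [[[u1 r1] [u2 r2] [u3 r3]] [[s1 s2 s3] [hmi hmr]]].
case: (posnP N) => [N0|Npos].
  rewrite N0 in s1 s2 *.
  have -> : M1 = [::] by apply/size0nil.
  have -> : M2 = [::] by apply/size0nil.
  split; first by [].
  split; first by [].
  by apply: (@final_equiv R lam 0%N [::] [::] M3 0 0).
pose A (j : 'I_N) := nth 0 M1 j.
pose B (j : 'I_N) := nth 0 M2 j.
have hA j : 0 <= A j < pi by apply: r1; apply: mem_nth; rewrite s1.
have hB j : 0 <= B j < pi by apply: r2; apply: mem_nth; rewrite s2.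
have iA : injective A.
  move=> j j' /eqP; rewrite /A nth_uniq ?s1 // => /eqP; exact: val_inj.
have iB : injective B.
  move=> j j' /eqP; rewrite /B nth_uniq ?s2 // => /eqP; exact: val_inj.
have hK (Cl : R) : Cl \in M3 -> forall j, exists k : 'I_N,
    int_mul_pi (A j + B k - beta lam (Cl + false%:R * pi)).
  move=> hCl j; have [h _] := hmi Cl hCl false.
  have jM : (j < size M1)%N by rewrite s1.
  have [B' [hB' [a [b hi]]]] := h (A j) (mem_nth 0 jM).
  have ik : (index B' M2 < N)%N by rewrite -s2 index_mem.
  exists (Ordinal ik); rewrite /B /= nth_index //.
  exact: imp_beta hl hi.
have hC0 : nth 0 M3 0 \in M3 by rewrite mem_nth // s3.
have hC1 : nth 0 M3 1 \in M3 by rewrite mem_nth // s3.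
have [K0 hK0] := fin_all_exists (hK _ hC0).
have [K1 hK1] := fin_all_exists (hK _ hC1).
have hr := hmr false false K0 K1 hK0 hK1.
have [c [c' [[hc hc'] [gA gB]]]] := core Npos hA iA hB iB hK0 hK1 hr.
have [e1 o1] : M1 =i Tseq N c /\ sort <=%R M1 = Tseq N c.
  apply: even_seq => // y hy.
  have iy : (index y M1 < N)%N by rewrite -s1 index_mem.
  by have := gA (Ordinal iy); rewrite /A /= nth_index.
have [e2 o2] : M2 =i Tseq N c' /\ sort <=%R M2 = Tseq N c'.
  apply: even_seq => // y hy.
  have iy : (index y M2 < N)%N by rewrite -s2 index_mem.
  by have := gB (Ordinal iy); rewrite /B /= nth_index.
split.
  move=> i hi; rewrite o1 !Tseq_nth ?(ltnW hi) //.
  by rewrite -[i.+1]addn1 natrD; ring.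
split.
  move=> i hi; rewrite o2 !Tseq_nth ?(ltnW hi) //.
  by rewrite -[i.+1]addn1 natrD; ring.
exact: final_equiv e1 e2.
Qed.
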